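(* $\mathtt{incl}$-$\mathtt{ESO}$-$\mathtt{HORN}\subseteq\mathtt{Trellis}$.
   Context: Fix a finite alphabet $\Sigma$. A nonempty word $w=w_1\cdots w_n$ is represented by the structure $\langle w\rangle=([1,n];(Q_s)_{s\in\Sigma},\mathtt{min},\mathtt{max},\mathtt{suc},\mathtt{pred})$ with $Q_s(i)\iff w_i=s$, $\mathtt{min}(i)\iff i=1$, $\mathtt{max}(i)\iff i=n$, $\mathtt{suc}(i)=\min(i+1,n)$, $\mathtt{pred}(i)=\max(i-1,1)$. For an integer $a$, $x+a$ denotes $\mathtt{suc}^a(x)$ if $a\ge0$ and $\mathtt{pred}^{-a}(x)$ if $a<0$; $y-b=\mathtt{pred}^b(y)$. An inclusion Horn formula is $\Phi=\exists\mathbf{R}\forall x\forall y\,\psi(x,y)$, $\mathbf{R}$ a finite set of binary relation symbols, $\psi$ a conjunction of Horn clauses over $\{(Q_s)_{s\in\Sigma},\mathtt{min},\mathtt{max},\mathtt{suc},\mathtt{pred}\}\cup\mathbf{R}\cup\{=,\le,<\}$, each of the form $x\le y\wedge\delta_1\wedge\cdots\wedge\delta_r\to\delta_0$ with $\delta_0$ an atom $R(x,y)$ ($R\in\mathbf{R}$) or $\bot$, each $\delta_i$ one of: $U(x+a)$, $\neg U(x+a)$, $U(y+a)$, $\neg U(y+a)$ for $U\in\{(Q_s)_{s\in\Sigma},\mathtt{min},\mathtt{max}\}$, $a\in\mathbb Z$; $x=y$ or $x<y$; $S(x+a,y-b)\wedge x+a\le y-b$ with $S\in\mathbf{R}$,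 $a,b\ge0$. $\mathtt{incl}$-$\mathtt{ESO}$-$\mathtt{HORN}$ is the class of languages $\{w\in\Sigma^+:\langle w\rangle\models\Phi\}$. A one-way cellular automaton (OCA) is $(Q,\Sigma,Q_{accept},\{-1,0\},\delta)$ with finite $Q\supseteq\Sigma$, $Q_{accept}\subseteq Q$, $\delta:Q^2\to Q$; on input $w=w_1\cdots w_n$ it uses cells $1,\dots,n$ (cells outside permanently in a state $\sharp$), with $\langle c,1\rangle=w_c$ and $\langle c,t\rangle=\delta(\langle c-1,t-1\rangle,\langle c,t-1\rangle)$ for $t>1$. $\mathtt{Trellis}$ is the class of languages $L\subseteq\Sigma^+$ such that some OCA satisfies $w\in L\iff\langle n,n\rangle\in Q_{accept}$ for all $w$ of length $n$ (equivalently, languages accepted by trellis automata). *)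

(* Defs.v *)
From Stdlib Require List.
From mathcomp Require Import all_boot all_algebra.
Set Implicit Arguments. Unset Strict Implicit. Unset Printing Implicit Defensive.

Inductive upred (S : Type) := UQ of S | Umin | Umax.
Arguments Umin {S}. Arguments Umax {S}.

Inductive var := Vx | Vy.

Inductive hyp (S : Type) (k : nat) :=
| HLit of bool & upred S & var & int
    (* HLit true U v a  = U(v+a);  HLit false U v a = ¬U(v+a) *)
| HEq
| HLt
| HRel of 'I_k & nat & nat.
    (* HRel R a b = R(x+a, y-b) ∧ x+a ≤ y-b, with a,b ≥ 0 *)
Arguments HEq {S k}. Arguments HLt {S k}.

(* Horn clause  x ≤ y ∧ δ_1 ∧ ... ∧ δ_r → δ_0 ; head None = ⊥ *)
Record clause (S : Type) (k : nat) := Clause {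
  body : seq (hyp S k);
  head : option 'I_k }.

(* Φ = ∃R ∀x∀y ψ(x,y), ψ a conjunction of Horn clauses *)
Record formula (S : Type) := Formula {
  nrel : nat;
  clauses : seq (clause S nrel) }.

(* x + a = suc^a(x) (a ≥ 0) or pred^(-a)(x) (a < 0), on domain [1,n] *)
Definition shift (n p : nat) (a : int) : nat :=
  match a with
  | Posz m => minn (p + m) n
  | Negz m => maxn (p - m.+1) 1
  end.

Definition upred_holds (S : finType) (w : seq S) (U : upred S) (i : nat) : bool :=
  match U with
  | UQ s => onth w i.-1 == Some s   (* w_i = s, positions 1-based *)
  | Umin => i == 1
  | Umax => i == size w
  end.

Definition var_val (x y : nat) (v : var) : nat :=
  match v with Vx => x | Vy => y end.

Definition hyp_holds (S : finType) (k : nat) (w : seq S)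
  (R : 'I_k -> nat -> nat -> Prop) (x y : nat) (h : hyp S k) : Prop :=
  match h with
  | HLit b U v a => upred_holds w U (shift (size w) (var_val x y v) a) = b
  | HEq => x = y
  | HLt => x < y
  | HRel T a b =>
      let p := shift (size w) x (Posz a) in
      let q := maxn (y - b) 1 in  (* y - b = pred^b(y) *)
      R T p q /\ p <= q
  end.

Definition clause_holds (S : finType) (k : nat) (w : seq S)
  (R : 'I_k -> nat -> nat -> Prop) (x y : nat) (c : clause S k) : Prop :=
  x <= y ->
  (forall h, List.In h (body c) -> hyp_holds w R x y h) ->
  match head c with
  | Some T => R T x y
  | None => False
  end.

Definition models (S : finType) (w : seq S) (Phi : formula S) : Prop :=
  exists R : 'I_(nrel Phi) -> nat -> nat -> Prop,
    forall x y, 0 < x <= size w -> 0 < y <= size w ->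
      forall c, List.In c (clauses Phi) -> clause_holds w R x y c.

Definition incl_ESO_HORN (S : finType) (L : seq S -> Prop) : Prop :=
  ~ L [::] /\
  exists Phi : formula S, forall w, w <> [::] -> (L w <-> models w Phi).

Record OCA (S : finType) := MkOCA {
  state : finType;
  inp : S -> state;          (* the inclusion Σ ⊆ Q *)
  sharp : state;             (* the permanent state of cells outside [1,n] *)
  accepting : pred state;
  delta : state -> state -> state }.

(* conf A w t c = <c, t+1> : state of cell c at time t+1 *)
Fixpoint conf (S : finType) (A : OCA S) (w : seq S) (t c : nat) : state A :=
  match t with
  | 0 => if c is c'.+1 then
           (match onth w c' with Some s => @inp S A s | None => @sharp S A end)
         else @sharp S A
  | t'.+1 => if c is c'.+1 then @delta S A (@conf S A w t' c') (@conf S A w t' c)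
             else @sharp S A
  end.

Definition oca_accepts (S : finType) (A : OCA S) (w : seq S) : bool :=
  @accepting S A (@conf S A w (size w).-1 (size w)).

Definition Trellis (S : finType) (L : seq S -> Prop) : Prop :=
  ~ L [::] /\
  exists A : OCA S,
    injective (@inp S A) /\ (forall s, @inp S A s <> @sharp S A) /\
    forall w, w <> [::] -> (L w <-> oca_accepts A w).

(* Main.v *)
Require Import Defs.
From mathcomp Require Import all_boot all_algebra.
From mathcomp Require Import zify.
From Stdlib Require Import ClassicalEpsilon.
Set Implicit Arguments. Unset Strict Implicit. Unset Printing Implicit Defensive.

Definition fac (S : Type) (w : seq S) i len := take len (drop i w).

Lemma fac_split (S : Type) (w : seq S) i t :
  i + t + 2 <= size w ->
  exists a u b, fac w i (t.+2) = a :: rcons u b /\ fac w i t.+1 = a :: u /\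
     fac w i.+1 t.+1 = rcons u b.
Proof.
move=> H.
have Hs : t.+2 <= size (drop i w) by rewrite size_drop; lia.
case E: (drop i w) Hs => [|a g] //= Hs.
have Hg : t < size g by lia.
exists a, (take t g), (nth a g t).
rewrite /fac E /= -take_nth //; split=> //; split=> //.
have -> : drop i.+1 w = g by rewrite -add1n -drop_drop E /= drop0.
by rewrite (take_nth a Hg).
Qed.

Lemma fac_one (S : Type) (w : seq S) i : i < size w ->
  exists s, onth w i = Some s /\ fac w i 1 = [:: s].
Proof.
rewrite /fac.
elim: w i => [|x w IH] [|i] //= Hi.
  by exists x; rewrite take0.
by apply: IH.
Qed.

Lemma ATL (S : finType) (L : seq S -> Prop) (F : finType) (sg : seq S -> F)
  (acc : pred F) :
  ~ L [::] ->
  (forall s s', sg [:: s] = sg [:: s'] -> s = s') ->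
  (forall a u b a' u' b', sg (a :: u) = sg (a' :: u') ->
      sg (rcons u b) = sg (rcons u' b') ->
      sg (a :: rcons u b) = sg (a' :: rcons u' b')) ->
  (forall w, w <> [::] -> (L w <-> acc (sg w))) ->
  Trellis L.
Proof.
move=> L0 inj cong Lacc; split=> //.
pose comb (x y : F) := epsilon (inhabits x) (fun z => exists a u b,
   sg (a :: u) = x /\ sg (rcons u b) = y /\ sg (a :: rcons u b) = z).
have combE a u b : comb (sg (a :: u)) (sg (rcons u b)) = sg (a :: rcons u b).
  have := epsilon_spec (inhabits (sg (a :: u))) (fun z => exists a0 u0 b0,
   sg (a0 :: u0) = sg (a :: u) /\ sg (rcons u0 b0) = sg (rcons u b)
   /\ sg (a0 :: rcons u0 b0) = z).
  case.
    by exists (sg (a :: rcons u b)), a, u, b.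
  move=> a0 [u0 [b0 [h1 [h2 h3]]]].
  by rewrite /comb -h3; apply: cong.
pose dl (p q : option F) := match p, q with
  | Some x, Some y => Some (comb x y) | _, _ => None end.
pose A := @MkOCA S (option F : finType) (fun s => Some (sg [:: s])) None
   (fun o => if o is Some v then acc v else false) dl.
exists A; split; first by move=> s s' [] /inj.
split; first by [].
have confE w t i : i + t + 1 <= size w ->
   conf A w t (i + t + 1) = Some (sg (fac w i t.+1)).
  elim: t i => [|t IH] i H.
    have [s [h1 h2]] := fac_one (i:=i) (w:=w) ltac:(lia).
    by rewrite addn0 addn1 /= h1 h2.
  have -> : i + t.+1 + 1 = (i + t + 1).+1 by lia.
  rewrite /= IH; last by lia.
  have -> : (i + t + 1).+1 = i.+1 + t + 1 by lia.
  rewrite IH; last by lia.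
  have [a [u [b [h1 [h2 h3]]]]] := fac_split (w := w) (i := i) (t := t) ltac:(lia).
  by rewrite /dl h1 h2 h3 combE.
move=> w wn; rewrite Lacc // /oca_accepts.
have Hn : 0 < size w by case: w wn.
have := confE w (size w).-1 0 ltac:(lia).
have -> : 0 + (size w).-1 + 1 = size w by lia.
move=> ->; rewrite /fac drop0 prednK // take_size /=.
by split; move/idP.
Qed.

Definition ev (S : finType) (w : seq S) (p : nat) : option S :=
  if p is q.+1 then onth w q else None.

Lemma evN (S : finType) (w : seq S) p : (ev w p == None) = (p == 0) || (size w < p).
Proof.
case: p => [|q] //=; rewrite ltnS -onthNE; by case: onth.
Qed.

Definition agree (S : finType) (A : nat) (w1 w2 : seq S) (x x' : nat) :=
  forall p1 p2, p1 + x' = p2 + x -> p1 <= x + A.+1 -> x <= p1 + A.+1 ->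
    ev w1 p1 = ev w2 p2.

Lemma rngE (S : finType) A (w1 w2 : seq S) z z' p1 p2 : agree A w1 w2 z z' ->
  p1 + z' = p2 + z -> p1 <= z + A.+1 -> z <= p1 + A.+1 ->
  (0 < p1 <= size w1) = (0 < p2 <= size w2).
Proof.
move=> Ag e h1 h2; have := Ag p1 p2 e h1 h2.
move=> E; have : (ev w1 p1 == None) = (ev w2 p2 == None) by rewrite E.
rewrite !evN; lia.
Qed.

Lemma shiftRel (S : finType) A (w1 w2 : seq S) z z' a :
  agree A w1 w2 z z' -> 0 < z <= size w1 -> 0 < z' <= size w2 -> absz a <= A ->
  shift (size w1) z a + z' = shift (size w2) z' a + z.
Proof.
move=> Ag h1 h2; case: a => m /= hm.
  have r1 := rngE (p1 := z + m) (p2 := z' + m) Ag ltac:(lia) ltac:(lia) ltac:(lia).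
  case: (leqP (z + m) (size w1)) => H.
    lia.
  have r2 := rngE (p1 := (size w1).+1) (p2 := (size w1).+1 + z' - z) Ag
     ltac:(lia) ltac:(lia) ltac:(lia).
  have r3 := rngE (p1 := (size w1)) (p2 := (size w1) + z' - z) Ag
     ltac:(lia) ltac:(lia) ltac:(lia).
  lia.
case: (ltnP m.+1 z) => H1; case: (ltnP m.+1 z') => H2.
- lia.
- have r := rngE (p1 := z - z') (p2 := 0) Ag ltac:(lia) ltac:(lia) ltac:(lia).
  lia.
- have r := rngE (p1 := 0) (p2 := z' - z) Ag ltac:(lia) ltac:(lia) ltac:(lia).
  lia.
- case: (ltngtP z z') => H3.
  + have r := rngE (p1 := 0) (p2 := z' - z) Ag ltac:(lia) ltac:(lia) ltac:(lia).
    lia.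
  + have r := rngE (p1 := z - z') (p2 := 0) Ag ltac:(lia) ltac:(lia) ltac:(lia).
    lia.
  + lia.
Qed.

Lemma LitAt (S : finType) (w1 w2 : seq S) U s1 s2 :
  0 < s1 <= size w1 -> 0 < s2 <= size w2 -> ev w1 s1 = ev w2 s2 ->
  ev w1 s1.-1 = ev w2 s2.-1 -> ev w1 s1.+1 = ev w2 s2.+1 ->
  upred_holds w1 U s1 = upred_holds w2 U s2.
Proof.
move=> h1 h2 e0 em ep; case: U => [s||] /=.
- by move: e0 {em ep}; case: s1 h1 => // s1; case: s2 h2 => // s2 _ _ /= ->.
- have : (ev w1 s1.-1 == None) = (ev w2 s2.-1 == None) by rewrite em.
  rewrite !evN; lia.
- have : (ev w1 s1.+1 == None) = (ev w2 s2.+1 == None) by rewrite ep.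
  rewrite !evN; lia.
Qed.

Lemma LitShift (S : finType) A (w1 w2 : seq S) z z' a U :
  agree A w1 w2 z z' -> 0 < z <= size w1 -> 0 < z' <= size w2 -> absz a <= A ->
  upred_holds w1 U (shift (size w1) z a) = upred_holds w2 U (shift (size w2) z' a).
Proof.
move=> Ag h1 h2 ha.
have R := shiftRel Ag h1 h2 ha.
have B1 : 0 < shift (size w1) z a <= size w1 /\ shift (size w1) z a <= z + A
   /\ z <= shift (size w1) z a + A.
  by case: a ha {R} => m /= hm; lia.
have B2 : 0 < shift (size w2) z' a <= size w2.
  by case: a ha {R B1} => m /= hm; lia.
move: Ag; rewrite /agree => Ag.
apply: LitAt => //; first by case: B1.
- by apply: Ag; lia.
- by apply: Ag; lia.
- by apply: Ag; lia.
Qed.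


Definition hb (S : Type) k (h : hyp S k) : nat := match h with
  | HLit _ _ _ a => absz a | HRel _ a b => a + b | _ => 0 end.

Lemma HT (S : finType) k A (w1 w2 : seq S) x y x' y'
  (X Y : 'I_k -> nat -> nat -> Prop) (h : hyp S k) :
  hb h <= A -> 0 < x -> x <= y -> y <= size w1 -> 0 < x' -> x' <= y' -> y' <= size w2 ->
  agree A w1 w2 x x' -> agree A w1 w2 y y' -> (x == y) = (x' == y') ->
  (forall T da db, da <= A -> db <= A -> x + da <= y - db ->
     X T (x + da) (y - db) -> Y T (x' + da) (y' - db) /\ x' + da <= y' - db) ->
  hyp_holds w1 X x y h -> hyp_holds w2 Y x' y' h.
Proof.
move=> hh x0 xy yn x0' xy' yn' agx agy eqxy Hat.
have rx : 0 < x <= size w1 by lia.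
have ry : 0 < y <= size w1 by lia.
have rx' : 0 < x' <= size w2 by lia.
have ry' : 0 < y' <= size w2 by lia.
case: h hh => [b U v a | | | T a b] /= hh.
- case: v => /=.
    by rewrite (LitShift U agx rx rx' hh).
  by rewrite (LitShift U agy ry ry' hh).
- by move=> exy; apply/eqP; rewrite -eqxy; apply/eqP.
- move=> lxy; have : x != y by lia.
  rewrite eqxy; lia.
- move=> [HX Hpq].
  have Rx := shiftRel (a := Posz a) agx rx rx' ltac:(simpl; lia).
  rewrite /= in Rx.
  have Ry : maxn (y - b) 1 + y' = maxn (y' - b) 1 + y.
    case: b hh Hpq HX => [|b] hh Hpq HX; first by lia.
    have := shiftRel (a := Negz b) agy ry ry' ltac:(simpl; lia).
    by [].
  have := Hat T (minn (x + a) (size w1) - x) (y - maxn (y - b) 1)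
     ltac:(lia) ltac:(lia) ltac:(lia).
  have -> : x + (minn (x + a) (size w1) - x) = minn (x + a) (size w1) by lia.
  have -> : y - (y - maxn (y - b) 1) = maxn (y - b) 1 by lia.
  move=> /(_ HX) [HY Hle].
  have -> : minn (x' + a) (size w2) = x' + (minn (x + a) (size w1) - x) by lia.
  have -> : maxn (y' - b) 1 = y' - (y - maxn (y - b) 1) by lia.
  by split.
Qed.

Definition closed (S : finType) (Phi : formula S) (w : seq S)
  (R : 'I_(nrel Phi) -> nat -> nat -> Prop) :=
  forall x y, 0 < x -> x <= y -> y <= size w ->
  forall c, List.In c (clauses Phi) -> forall T, Defs.head c = Some T ->
  (forall h, List.In h (body c) -> hyp_holds w R x y h) -> R T x y.
Arguments closed {S} Phi w R.

Definition D (S : finType) (Phi : formula S) (w : seq S) T x y :=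
  forall R, closed Phi w R -> R T x y.
Arguments D {S} Phi w T x y.

Lemma hyp_mono (S : finType) k (w : seq S) (X Y : 'I_k -> nat -> nat -> Prop) x y h :
  (forall T p q, X T p q -> Y T p q) -> hyp_holds w X x y h -> hyp_holds w Y x y h.
Proof. by move=> XY; case: h => //= T a b [H1 H2]; split => //; apply: XY. Qed.

Lemma D_closed (S : finType) (Phi : formula S) w : closed Phi w (D Phi w).
Proof.
move=> x y x0 xy yn c cin T hc Hb R cR.
apply: (cR x y x0 xy yn c cin T hc) => h hin.
apply: hyp_mono (Hb h hin) => T' p q; exact.
Qed.

Lemma D_sup (S : finType) (Phi : formula S) w T x y :
  D Phi w T x y -> 0 < x /\ x <= y /\ y <= size w.
Proof.
move=> HD; apply: (HD (fun _ x y => 0 < x /\ x <= y /\ y <= size w)).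
by move=> x' y' *.
Qed.

Lemma sum_le (X : Type) (f : X -> nat) (l : seq X) x :
  List.In x l -> f x <= sumn (map f l).
Proof.
elim: l => [|z l IH] //= [->|H]; first by apply: leq_addr.
by apply: leq_trans (IH H) _; apply: leq_addl.
Qed.

Definition Ab (S : finType) (Phi : formula S) :=
  sumn (map (fun c => sumn (map (@hb S (nrel Phi)) (body c))) (clauses Phi)).

Lemma hb_le (S : finType) (Phi : formula S) c h :
  List.In c (clauses Phi) -> List.In h (body c) -> hb h <= Ab Phi.
Proof.
move=> hc hh; apply: leq_trans (sum_le (@hb S (nrel Phi)) hh) _.
exact: (sum_le (fun c => sumn (map (@hb S (nrel Phi)) (body c))) hc).
Qed.

Definition fires (S : finType) (Phi : formula S) (w : seq S) x y :=
  exists c, List.In c (clauses Phi) /\ Defs.head c = None /\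
    forall h, List.In h (body c) -> hyp_holds w (D Phi w) x y h.

Definition badIn (S : finType) (Phi : formula S) (w : seq S) lo hi :=
  exists x y, lo <= x /\ x <= y /\ y <= hi /\ fires Phi w x y.

Lemma models_iff (S : finType) (Phi : formula S) w :
  models w Phi <-> ~ badIn Phi w 1 (size w).
Proof.
split.
  move=> [R HR] [x [y [x1 [xy [yn [c [cin [hc Hb]]]]]]]].
  have cR : closed Phi w R.
    move=> x' y' x0 xy' yn' c' cin' T hc' Hb'.
    have := HR x' y' ltac:(lia) ltac:(lia) c' cin' xy'.
    by rewrite hc'; apply.
  have := HR x y ltac:(lia) ltac:(lia) c cin xy.
  rewrite hc; apply => h hin.
  apply: hyp_mono (Hb h hin) => T p q; exact.
move=> nb; exists (D Phi w) => x y hx hy c cin xy Hb.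
case hc: (Defs.head c) => [T|].
  apply: (D_closed (x := x) (y := y)) Hb => //; lia.
apply: nb; exists x, y; split; first by lia.
split => //; split; first by lia.
by exists c.
Qed.

Lemma Dshift (S : finType) (Phi : formula S) (w1 w2 : seq S) lo hi lo' :
  0 < lo -> hi <= size w1 -> 0 < lo' -> hi + lo' <= size w2 + lo ->
  (forall p, lo <= p <= hi -> agree (Ab Phi) w1 w2 p (p + lo' - lo)) ->
  forall T x y, lo <= x -> x <= y -> y <= hi ->
    D Phi w1 T x y -> D Phi w2 T (x + lo' - lo) (y + lo' - lo).
Proof.
move=> lo0 hin lo0' hin' Ag.
pose R1 T x y := (lo <= x /\ x <= y /\ y <= hi) -> D Phi w2 T (x + lo' - lo) (y + lo' - lo).
have cR : closed Phi w1 R1.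
  move=> x y x0 xy yn c cin T hc Hb [hl [hxy hh]].
  apply: (D_closed (x := x + lo' - lo) (y := y + lo' - lo)) hc _ => //; try lia.
  move=> h hin0.
  apply: (HT (X := R1)) (Hb h hin0).
  - exact: hb_le cin hin0.
  all: try lia.
  - by apply: Ag; lia.
  - by apply: Ag; lia.
  - move=> T' da db hda hdb hle HR.
    have := HR ltac:(lia).
    have -> : x + da + lo' - lo = x + lo' - lo + da by lia.
    have -> : y - db + lo' - lo = y + lo' - lo - db by lia.
    by move=> H; split => //; lia.
move=> T x y h1 h2 h3 HD.
by apply: (HD R1 cR).
Qed.

Lemma fires_shift (S : finType) (Phi : formula S) (w1 w2 : seq S) lo hi lo' :
  0 < lo -> hi <= size w1 -> 0 < lo' -> hi + lo' <= size w2 + lo ->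
  (forall p, lo <= p <= hi -> agree (Ab Phi) w1 w2 p (p + lo' - lo)) ->
  forall x y, lo <= x -> x <= y -> y <= hi ->
    fires Phi w1 x y -> fires Phi w2 (x + lo' - lo) (y + lo' - lo).
Proof.
move=> lo0 hin lo0' hin' Ag x y hl hxy hh [c [cin [hc Hb]]].
exists c; split => //; split => // h hin0.
apply: (HT (X := D Phi w1)) (Hb h hin0).
- exact: hb_le cin hin0.
all: try lia.
- by apply: Ag; lia.
- by apply: Ag; lia.
- move=> T' da db hda hdb hle HR.
  have := Dshift lo0 hin lo0' hin' Ag (x := x + da) (y := y - db) ltac:(lia) ltac:(lia) ltac:(lia) HR.
  have -> : x + da + lo' - lo = x + lo' - lo + da by lia.
  have -> : y - db + lo' - lo = y + lo' - lo - db by lia.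
  by move=> H; split => //; lia.
Qed.

Lemma bad_shift (S : finType) (Phi : formula S) (w1 w2 : seq S) lo hi lo' :
  0 < lo -> hi <= size w1 -> 0 < lo' -> hi + lo' <= size w2 + lo ->
  (forall p, lo <= p <= hi -> agree (Ab Phi) w1 w2 p (p + lo' - lo)) ->
  badIn Phi w1 lo hi -> badIn Phi w2 lo' (hi + lo' - lo).
Proof.
move=> lo0 hin lo0' hin' Ag [x [y [hl [hxy [hh F]]]]].
exists (x + lo' - lo), (y + lo' - lo); split; first by lia.
split; first by lia. split; first by lia.
exact: (fires_shift lo0 hin lo0' hin' Ag).
Qed.

Lemma onth_take (T : eqType) (s : seq T) n i : i < n -> onth (take n s) i = onth s i.
Proof. by move=> h; rewrite !onthE map_take nth_take. Qed.

Lemma onth_drop (T : eqType) (s : seq T) n i : onth (drop n s) i = onth s (n + i).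
Proof. by rewrite !onthE map_drop nth_drop. Qed.

Lemma onth_rev (T : finType) (s : seq T) j : j < size s ->
  onth (rev s) j = onth s (size s - j.+1).
Proof. by move=> h; rewrite !onthE map_rev nth_rev ?size_map. Qed.

Lemma drop_cat_le (T : Type) (s1 s2 : seq T) d : d <= size s1 ->
  drop d (s1 ++ s2) = drop d s1 ++ s2.
Proof.
move=> h; rewrite drop_cat; case: ifP => // /negbT; rewrite -leqNgt => h2.
have -> : d = size s1 by apply/eqP; rewrite eqn_leq h h2.
by rewrite subnn drop0 drop_size.
Qed.

Lemma agree_sym (S : finType) A (w1 w2 : seq S) x x' :
  agree A w1 w2 x x' -> agree A w2 w1 x' x.
Proof. move=> Ag p1 p2 e h1 h2; symmetry; apply: Ag; lia. Qed.

Lemma agree_refl (S : finType) A (w : seq S) x : agree A w w x x.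
Proof. by move=> p1 p2 e _ _; have -> : p1 = p2 by lia. Qed.

Lemma AgR (S : finType) A (pre c suf : seq S) p :
  size pre < p <= size pre + size c ->
  agree A (pre ++ c ++ suf) (pre ++ c ++ take (A.+2) suf) p p.
Proof.
move=> hp p1 p2 e h1 h2; have <- : p1 = p2 by lia.
case: p1 {e} h1 h2 => [|q] //= h1 h2.
rewrite !catA !onth_cat size_cat; case: ifP => // hq.
rewrite onth_take //; lia.
Qed.

Lemma AgL (S : finType) A (pre c suf : seq S) d p :
  d + A.+2 <= size pre ->
  size pre < p <= size pre + size c ->
  agree A (pre ++ c ++ suf) (drop d pre ++ c ++ suf) p (p - d).
Proof.
move=> hd hp p1 p2 e h1 h2.
have hp2 : p2 = p1 - d by lia.
subst p2.
case: p1 e h1 h2 => [|q] e h1 h2; first by lia.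
have -> : q.+1 - d = (q - d).+1 by lia.
rewrite /= -drop_cat_le; last by lia.
by rewrite onth_drop; congr onth; lia.
Qed.

Lemma TRR_D (S : finType) (Phi : formula S) (pre c suf : seq S) T x y :
  size pre < x -> x <= y -> y <= size pre + size c ->
  D Phi (pre ++ c ++ suf) T x y <-> D Phi (pre ++ c ++ take (Ab Phi).+2 suf) T x y.
Proof.
move=> h1 h2 h3.
have s1 : size (pre ++ c ++ suf) >= size pre + size c by rewrite !size_cat; lia.
have s2 : size (pre ++ c ++ take (Ab Phi).+2 suf) >= size pre + size c
  by rewrite !size_cat; lia.
split => HD.
- have := Dshift (lo := (size pre).+1) (hi := size pre + size c) (lo' := (size pre).+1)
    (w1 := pre ++ c ++ suf) (w2 := pre ++ c ++ take (Ab Phi).+2 suf) ltac:(lia) ltac:(lia) ltac:(lia) ltac:(lia)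
    _ (T := T) (x := x) (y := y) ltac:(lia) ltac:(lia) ltac:(lia) HD.
  have -> : x + (size pre).+1 - (size pre).+1 = x by lia.
  have -> : y + (size pre).+1 - (size pre).+1 = y by lia.
  apply => p hp; have -> : p + (size pre).+1 - (size pre).+1 = p by lia.
  apply: AgR; lia.
- have := Dshift (lo := (size pre).+1) (hi := size pre + size c) (lo' := (size pre).+1)
    (w1 := pre ++ c ++ take (Ab Phi).+2 suf) (w2 := pre ++ c ++ suf) ltac:(lia) ltac:(lia) ltac:(lia) ltac:(lia)
    _ (T := T) (x := x) (y := y) ltac:(lia) ltac:(lia) ltac:(lia) HD.
  have -> : x + (size pre).+1 - (size pre).+1 = x by lia.
  have -> : y + (size pre).+1 - (size pre).+1 = y by lia.
  apply => p hp; have -> : p + (size pre).+1 - (size pre).+1 = p by lia.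
  apply: agree_sym; apply: AgR; lia.
Qed.

Lemma TRR_bad (S : finType) (Phi : formula S) (pre c suf : seq S) lo hi :
  size pre < lo -> hi <= size pre + size c ->
  badIn Phi (pre ++ c ++ suf) lo hi <-> badIn Phi (pre ++ c ++ take (Ab Phi).+2 suf) lo hi.
Proof.
move=> h1 h3.
have s1 : size (pre ++ c ++ suf) >= size pre + size c by rewrite !size_cat; lia.
have s2 : size (pre ++ c ++ take (Ab Phi).+2 suf) >= size pre + size c
  by rewrite !size_cat; lia.
split => HD.
- have := bad_shift (lo := lo) (hi := hi) (lo' := lo)
    (w1 := pre ++ c ++ suf) (w2 := pre ++ c ++ take (Ab Phi).+2 suf) ltac:(lia) ltac:(lia) ltac:(lia) ltac:(lia)
    _ HD.
  have -> : hi + lo - lo = hi by lia.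
  apply => p hp; have -> : p + lo - lo = p by lia.
  apply: AgR; lia.
- have := bad_shift (lo := lo) (hi := hi) (lo' := lo)
    (w1 := pre ++ c ++ take (Ab Phi).+2 suf) (w2 := pre ++ c ++ suf) ltac:(lia) ltac:(lia) ltac:(lia) ltac:(lia)
    _ HD.
  have -> : hi + lo - lo = hi by lia.
  apply => p hp; have -> : p + lo - lo = p by lia.
  apply: agree_sym; apply: AgR; lia.
Qed.

Lemma TRL_D (S : finType) (Phi : formula S) (pre c suf : seq S) T x y :
  size pre < x -> x <= y -> y <= size pre + size c ->
  let d := size pre - (Ab Phi).+2 in
  D Phi (pre ++ c ++ suf) T x y <-> D Phi (drop d pre ++ c ++ suf) T (x - d) (y - d).
Proof.
move=> h1 h2 h3 d.
case: (leqP (size pre) (Ab Phi).+2) => hK.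
  have -> : d = 0 by rewrite /d; lia.
  by rewrite drop0 !subn0.
have s1 : size (pre ++ c ++ suf) >= size pre + size c by rewrite !size_cat; lia.
have s2 : size (drop d pre ++ c ++ suf) + d >= size pre + size c
  by rewrite !size_cat size_drop; lia.
split => HD.
- have := Dshift (lo := (size pre).+1) (hi := size pre + size c) (lo' := (size pre).+1 - d)
    (w1 := pre ++ c ++ suf) (w2 := drop d pre ++ c ++ suf) ltac:(lia) ltac:(lia) ltac:(lia) ltac:(lia)
    _ (T := T) (x := x) (y := y) ltac:(lia) ltac:(lia) ltac:(lia) HD.
  have -> : x + ((size pre).+1 - d) - (size pre).+1 = x - d by lia.
  have -> : y + ((size pre).+1 - d) - (size pre).+1 = y - d by lia.
  apply => p hp; have -> : p + ((size pre).+1 - d) - (size pre).+1 = p - d by lia.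
  apply: AgL; rewrite /d; lia.
- have := Dshift (lo := (size pre).+1 - d) (hi := size pre + size c - d) (lo' := (size pre).+1)
    (w1 := drop d pre ++ c ++ suf) (w2 := pre ++ c ++ suf) ltac:(lia) ltac:(rewrite !size_cat size_drop; lia) ltac:(lia) ltac:(lia)
    _ (T := T) (x := x - d) (y := y - d) ltac:(lia) ltac:(lia) ltac:(lia) HD.
  have -> : x - d + (size pre).+1 - ((size pre).+1 - d) = x by lia.
  have -> : y - d + (size pre).+1 - ((size pre).+1 - d) = y by lia.
  apply => p hp; have -> : p + (size pre).+1 - ((size pre).+1 - d) = p + d by lia.
  apply: agree_sym.
  have := AgL (A := Ab Phi) (pre := pre) (c := c) suf (d := d) (p := p + d) ltac:(rewrite /d; lia) ltac:(lia).
  by have -> : p + d - d = p by lia.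
Qed.

Lemma TRL_bad (S : finType) (Phi : formula S) (pre c suf : seq S) lo hi :
  size pre < lo -> lo <= hi -> hi <= size pre + size c ->
  let d := size pre - (Ab Phi).+2 in
  badIn Phi (pre ++ c ++ suf) lo hi <-> badIn Phi (drop d pre ++ c ++ suf) (lo - d) (hi - d).
Proof.
move=> h1 h2 h3 d.
case: (leqP (size pre) (Ab Phi).+2) => hK.
  have -> : d = 0 by rewrite /d; lia.
  by rewrite drop0 !subn0.
have s1 : size (pre ++ c ++ suf) >= size pre + size c by rewrite !size_cat; lia.
have s2 : size (drop d pre ++ c ++ suf) + d >= size pre + size c
  by rewrite !size_cat size_drop; lia.
split => HD.
- have := bad_shift (lo := lo) (hi := hi) (lo' := lo - d)
    (w1 := pre ++ c ++ suf) (w2 := drop d pre ++ c ++ suf) ltac:(lia) ltac:(lia) ltac:(lia) ltac:(lia)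
    _ HD.
  have -> : hi + (lo - d) - lo = hi - d by lia.
  apply => p hp; have -> : p + (lo - d) - lo = p - d by lia.
  apply: AgL; rewrite /d; lia.
- have := bad_shift (lo := lo - d) (hi := hi - d) (lo' := lo)
    (w1 := drop d pre ++ c ++ suf) (w2 := pre ++ c ++ suf) ltac:(lia) ltac:(rewrite !size_cat size_drop; lia) ltac:(lia) ltac:(lia)
    _ HD.
  have -> : hi - d + lo - (lo - d) = hi by lia.
  apply => p hp; have -> : p + lo - (lo - d) = p + d by lia.
  apply: agree_sym.
  have := AgL (A := Ab Phi) (pre := pre) (c := c) suf (d := d) (p := p + d) ltac:(rewrite /d; lia) ltac:(lia).
  by have -> : p + d - d = p by lia.
Qed.

Lemma FI (S : finType) (Phi : formula S) (W W' : seq S) X Y Y' :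
  0 < X -> X < Y -> Y <= size W -> X < Y' -> Y' <= size W' ->
  agree (Ab Phi) W W' X X -> agree (Ab Phi) W W' Y Y' ->
  (forall T da db, da <= Ab Phi -> db <= Ab Phi -> 0 < da + db ->
     D Phi W T (X + da) (Y - db) -> D Phi W' T (X + da) (Y' - db)) ->
  forall T, D Phi W T X Y -> D Phi W' T X Y'.
Proof.
move=> X0 XY YW XY' YW' agX agY Hsub.
pose R' T x y := if (x == X) && (y == Y) then D Phi W' T X Y'
                 else ((X <= x) && (y <= Y) -> D Phi W T x y).
have cR : closed Phi W R'.
  move=> x y x0 xy yn c cin T hc Hb.
  case E: ((x == X) && (y == Y)).
    move/andP: E => [/eqP ex /eqP ey]; subst x y.
    rewrite /R' !eqxx /=.
    apply: (D_closed (x := X) (y := Y')) hc _ => //; try lia.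
    move=> h hin; apply: (HT (X := R')) (Hb h hin); try lia.
    - exact: hb_le cin hin.
    - exact: agX.
    - exact: agY.
    - move=> T' da db hda hdb hle.
      case: (posnP (da + db)) => hd.
        have -> : da = 0 by lia.
        have -> : db = 0 by lia.
        rewrite !addn0 !subn0 /R' !eqxx /= => H; split => //; lia.
      rewrite /R'.
      have -> : (X + da == X) && (Y - db == Y) = false by apply/negbTE; lia.
      move=> H; have H2 := Hsub T' da db hda hdb hd (H ltac:(lia)).
      split => //; have := D_sup H2; lia.
  rewrite /R' E => hs.
  apply: (D_closed (x := x) (y := y)) hc _ => //.
  move=> h hin; apply: (HT (X := R') (w1 := W) (x := x) (y := y)) (Hb h hin); try lia.
  - exact: hb_le cin hin.
  - exact: agree_refl.
  - exact: agree_refl.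
  - move=> T' da db hda hdb hle.
    rewrite /R'.
    have -> : (x + da == X) && (y - db == Y) = false by apply/negbTE; lia.
    move=> H; split; last by lia.
    by apply: H; lia.
move=> T HD; have := HD R' cR; by rewrite /R' !eqxx.
Qed.

Lemma FIbad (S : finType) (Phi : formula S) (W W' : seq S) X Y Y' :
  0 < X -> X < Y -> Y <= size W -> X < Y' -> Y' <= size W' ->
  agree (Ab Phi) W W' X X -> agree (Ab Phi) W W' Y Y' ->
  (forall T da db, da <= Ab Phi -> db <= Ab Phi -> 0 < da + db ->
     D Phi W T (X + da) (Y - db) -> D Phi W' T (X + da) (Y' - db)) ->
  fires Phi W X Y -> fires Phi W' X Y'.
Proof.
move=> X0 XY YW XY' YW' agX agY Hsub [c [cin [hc Hb]]].
have Hfull := FI X0 XY YW XY' YW' agX agY Hsub.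
exists c; split => //; split => // h hin.
apply: (HT (X := D Phi W)) (Hb h hin); try lia.
- exact: hb_le cin hin.
- exact: agX.
- exact: agY.
- move=> T' da db hda hdb hle H.
  case: (posnP (da + db)) => hd.
    have e1 : da = 0 by lia.
    have e2 : db = 0 by lia.
    subst da db; rewrite !addn0 !subn0 in H *.
    split; [exact: Hfull | lia].
  have H2 := Hsub T' da db hda hdb hd H.
  split => //; have := D_sup H2; lia.
Qed.

Definition pb (P : Prop) : bool := if excluded_middle_informative P then true else false.

Lemma pbT (P : Prop) : pb P = true <-> P.
Proof. by rewrite /pb; case: excluded_middle_informative. Qed.

Lemma pb_eq (P Q : Prop) : pb P = pb Q -> P -> Q.
Proof. by rewrite /pb; do 2 case: excluded_middle_informative. Qed.

Lemma pb_iff (P Q : Prop) : (P <-> Q) -> pb P = pb Q.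
Proof.
rewrite /pb => h; case: excluded_middle_informative => a;
  case: excluded_middle_informative => b //; exfalso; tauto.
Qed.

Definition KK (S : finType) (Phi : formula S) := (Ab Phi).+2.

Definition Cd (S : finType) (Phi : formula S) := {ffun 'I_(KK Phi) -> option S}.

Definition real (S : finType) (Phi : formula S) (f : Cd Phi) : seq S :=
  pmap id [seq f i | i <- enum 'I_(KK Phi)].

Lemma pmap_iota (S : eqType) (s : seq S) m n :
  pmap id (map (onth s) (iota m n)) = take n (drop m s).
Proof.
elim: n m => [|n IH] m /=; first by rewrite take0.
case: (ltnP m (size s)) => h.
  case E: (onth s m) => [x|]; last by have := onthTE s m; rewrite E h.
  rewrite /= IH (drop_nth x h) /= (@onth_nth _ x x _ _ E) //.
have hd : drop m s = [::] by apply: drop_oversize.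
rewrite onth_default // /= IH hd.
by have -> : drop m.+1 s = [::] by apply: drop_oversize; lia.
Qed.

Lemma real_surj (S : finType) (Phi : formula S) (s : seq S) :
  size s <= KK Phi -> exists f : Cd Phi, real f = s.
Proof.
move=> hs; exists [ffun i : 'I_(KK Phi) => onth s i].
rewrite /real.
have -> : [seq [ffun i : 'I_(KK Phi) => onth s i] i | i <- enum 'I_(KK Phi)] =
          map (onth s) (map val (enum 'I_(KK Phi))).
  by rewrite -map_comp; apply: eq_map => i; rewrite ffunE.
by rewrite val_enum_ord pmap_iota drop0 take_oversize.
Qed.

Lemma real_size (S : finType) (Phi : formula S) (f : Cd Phi) : size (real f) <= KK Phi.
Proof.
rewrite /real size_pmap; apply: leq_trans (count_size _ _) _.
by rewrite size_map size_enum_ord.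
Qed.

Definition tabT (S : finType) (Phi : formula S) :=
  {ffun 'I_(Ab Phi).+1 * 'I_(Ab Phi).+1 * 'I_(nrel Phi) -> bool}.

Definition info (S : finType) (Phi : formula S) (u l r : seq S) : tabT Phi * bool :=
  ([ffun e : 'I_(Ab Phi).+1 * 'I_(Ab Phi).+1 * 'I_(nrel Phi) =>
       pb (D Phi (l ++ u ++ r) e.2 (size l + 1 + e.1.1) (size l + size u - e.1.2))],
   pb (badIn Phi (l ++ u ++ r) (size l + 1) (size l + size u))).

Definition sg (S : finType) (Phi : formula S) (u : seq S) :=
  ([ffun i : 'I_(KK Phi) => onth u i], [ffun i : 'I_(KK Phi) => onth (rev u) i],
   [ffun c : Cd Phi * Cd Phi => info Phi u (real c.1) (real c.2)]).

Definition ieq (S : finType) (Phi : formula S) (u u' : seq S) :=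
  forall l r, size l <= KK Phi -> size r <= KK Phi ->
  (forall T da db, da <= Ab Phi -> db <= Ab Phi ->
     D Phi (l ++ u ++ r) T (size l + 1 + da) (size l + size u - db) ->
     D Phi (l ++ u' ++ r) T (size l + 1 + da) (size l + size u' - db)) /\
  (badIn Phi (l ++ u ++ r) (size l + 1) (size l + size u) ->
   badIn Phi (l ++ u' ++ r) (size l + 1) (size l + size u')).

Lemma sg_ieq (S : finType) (Phi : formula S) (u u' : seq S) :
  sg Phi u = sg Phi u' -> ieq Phi u u'.
Proof.
move=> [_ _ /ffunP E] l r hl hr.
have [fl <-] := real_surj hl.
have [fr <-] := real_surj hr.
have := E (fl, fr); rewrite !ffunE /= => -[/ffunP Et Eb].
split; last by apply: pb_eq.
move=> T da db hda hdb.
have := Et (Ordinal (n := (Ab Phi).+1) (m := da) ltac:(lia),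
            Ordinal (n := (Ab Phi).+1) (m := db) ltac:(lia), T).
rewrite !ffunE /=; exact: pb_eq.
Qed.

Lemma ev_cat3 (S : finType) (l v r : seq S) p :
  ev (l ++ v ++ r) p = if p <= size l then ev l p
    else if p <= size l + size v then onth v (p - size l - 1)
    else onth r (p - size l - size v - 1).
Proof.
case: p => [|q]; first by [].
rewrite /= onth_cat; case: ifP => h1 //.
rewrite onth_cat; case: ifP => h2.
  rewrite ifT; last by lia.
  by congr onth; lia.
rewrite ifF; last by lia.
by congr onth; lia.
Qed.

Lemma agFX (S : finType) A (l v v' r : seq S) :
  A.+2 <= size v -> A.+2 <= size v' -> (forall i, i < A.+2 -> onth v i = onth v' i) ->
  agree A (l ++ v ++ r) (l ++ v' ++ r) (size l + 1) (size l + 1).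
Proof.
move=> sv sv' HP p1 p2 e h1 h2.
have <- : p1 = p2 by lia.
rewrite !ev_cat3; case: ifP => // c1.
rewrite ifT; last by lia.
rewrite ifT; last by lia.
apply: HP; lia.
Qed.

Lemma agFY (S : finType) A (l v v' r : seq S) :
  A.+2 <= size v -> A.+2 <= size v' ->
  (forall i, i < A.+2 -> onth (rev v) i = onth (rev v') i) ->
  agree A (l ++ v ++ r) (l ++ v' ++ r) (size l + size v) (size l + size v').
Proof.
move=> sv sv' HQ p1 p2 e h1 h2.
rewrite !ev_cat3.
rewrite ifF; last by lia.
rewrite [X in _ = X]ifF; last by lia.
case: ifP => c1.
  rewrite [X in _ = X]ifT; last by lia.
  have t1 := onth_rev (s := v) (j := size l + size v - p1) ltac:(lia).
  have t2 := onth_rev (s := v') (j := size l + size v - p1) ltac:(lia).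
  have -> : p1 - size l - 1 = size v - (size l + size v - p1).+1 by lia.
  have -> : p2 - size l - 1 = size v' - (size l + size v - p1).+1 by lia.
  rewrite -t1 -t2; apply: HQ; lia.
rewrite [X in _ = X]ifF; last by lia.
by congr onth; lia.
Qed.

Lemma badW (S : finType) (Phi : formula S) w lo hi lo' hi' :
  lo <= lo' -> hi' <= hi -> badIn Phi w lo' hi' -> badIn Phi w lo hi.
Proof.
move=> h1 h2 [x [y [a1 [a2 [a3 F]]]]]; exists x, y; split; first by lia.
split => //; split => //; lia.
Qed.

Lemma cong_dir (S : finType) (Phi : formula S) (a b : S) (u u' l r : seq S) :
  ieq Phi (a :: u) (a :: u') -> ieq Phi (rcons u b) (rcons u' b) ->
  (forall i, i < (Ab Phi).+2 -> onth (a :: rcons u b) i = onth (a :: rcons u' b) i) ->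
  (forall i, i < (Ab Phi).+2 ->
     onth (rev (a :: rcons u b)) i = onth (rev (a :: rcons u' b)) i) ->
  (Ab Phi).+2 <= size (a :: rcons u b) -> (Ab Phi).+2 <= size (a :: rcons u' b) ->
  size l <= KK Phi -> size r <= KK Phi ->
  (forall T da db, da <= Ab Phi -> db <= Ab Phi ->
     D Phi (l ++ (a :: rcons u b) ++ r) T (size l + 1 + da) (size l + size (a :: rcons u b) - db) ->
     D Phi (l ++ (a :: rcons u' b) ++ r) T (size l + 1 + da) (size l + size (a :: rcons u' b) - db)) /\
  (badIn Phi (l ++ (a :: rcons u b) ++ r) (size l + 1) (size l + size (a :: rcons u b)) ->
   badIn Phi (l ++ (a :: rcons u' b) ++ r) (size l + 1) (size l + size (a :: rcons u' b))).
Proof.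
move=> Iau Iub HP HQ sv sv' hl hr.
have hK : KK Phi = (Ab Phi).+2 by [].
have eW : forall u0 : seq S, l ++ (a :: rcons u0 b) ++ r = l ++ (a :: u0) ++ (b :: r).
  by move=> u0; rewrite /= cat_rcons.
have eW2 : forall u0 : seq S, l ++ (a :: rcons u0 b) ++ r = rcons l a ++ rcons u0 b ++ r.
  by move=> u0; rewrite cat_rcons.
have szv : size (a :: rcons u b) = (size u).+2 by rewrite /= size_rcons.
have szv' : size (a :: rcons u' b) = (size u').+2 by rewrite /= size_rcons.
have szl : size (rcons l a) = (size l).+1 by rewrite size_rcons.
have szub : size (rcons u b) = (size u).+1 by rewrite size_rcons.
have szub' : size (rcons u' b) = (size u').+1 by rewrite size_rcons.
have szau : size (a :: u) = (size u).+1 by [].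
have szau' : size (a :: u') = (size u').+1 by [].
set d := size (rcons l a) - (Ab Phi).+2.
have szl1 : size (drop d (rcons l a)) = size (rcons l a) - d by rewrite size_drop.
have hl1 : size (drop d (rcons l a)) <= KK Phi by rewrite szl1 /d; lia.
have hr1 : size (take (Ab Phi).+2 (b :: r)) <= KK Phi by rewrite size_take; case: ifP => hh; lia.
have [Iau1 Iau2] := Iau l (take (Ab Phi).+2 (b :: r)) hl hr1.
have [Iub1 Iub2] := Iub (drop d (rcons l a)) r hl1 hr.
have Hsub : forall T da db, da <= Ab Phi -> db <= Ab Phi -> 0 < da + db ->
     D Phi (l ++ (a :: rcons u b) ++ r) T (size l + 1 + da) (size l + size (a :: rcons u b) - db) ->
     D Phi (l ++ (a :: rcons u' b) ++ r) T (size l + 1 + da) (size l + size (a :: rcons u' b) - db).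
  move=> T da db hda hdb hd H.
  have [o1 [o2 o3]] := D_sup H.
  case: (posnP db) => hdb0.
  - (* use the suffix part u b *)
    move: H; rewrite eW2 => H.
    have E1 := @TRL_D S Phi (rcons l a) (rcons u b) r T (size l + 1 + da)
       (size l + size (a :: rcons u b) - db) ltac:(lia) ltac:(lia) ltac:(lia).
    cbv zeta in E1; fold d in E1.
    have H1 := proj1 E1 H.
    have e1 : size l + 1 + da - d = size (drop d (rcons l a)) + 1 + (da - 1) by lia.
    have e2 : size l + size (a :: rcons u b) - db - d =
              size (drop d (rcons l a)) + size (rcons u b) - db by lia.
    rewrite e1 e2 in H1.
    have H2 := Iub1 T (da - 1) db ltac:(lia) ltac:(lia) H1.
    have [q1 [q2 q3]] := D_sup H2.
    have E2 := @TRL_D S Phi (rcons l a) (rcons u' b) r T (size l + 1 + da)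
       (size l + size (a :: rcons u' b) - db) ltac:(lia) ltac:(lia) ltac:(lia).
    cbv zeta in E2; fold d in E2.
    rewrite eW2; apply/E2.
    have -> : size l + 1 + da - d = size (drop d (rcons l a)) + 1 + (da - 1) by lia.
    have -> : size l + size (a :: rcons u' b) - db - d =
              size (drop d (rcons l a)) + size (rcons u' b) - db by lia.
    exact: H2.
  - (* use the prefix part a u *)
    move: H; rewrite eW => H.
    have E1 := @TRR_D S Phi l (a :: u) (b :: r) T (size l + 1 + da)
       (size l + size (a :: rcons u b) - db) ltac:(lia) ltac:(lia) ltac:(simpl; lia).
    have H1 := proj1 E1 H.
    have e2 : size l + size (a :: rcons u b) - db = size l + size (a :: u) - (db - 1)
      by rewrite /=; lia.
    rewrite e2 in H1.
    have H2 := Iau1 T da (db - 1) ltac:(lia) ltac:(lia) H1.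
    have [q1 [q2 q3]] := D_sup H2.
    have E2 := @TRR_D S Phi l (a :: u') (b :: r) T (size l + 1 + da)
       (size l + size (a :: rcons u' b) - db) ltac:(lia) ltac:(lia)
       ltac:(simpl; lia).
    rewrite eW; apply/E2.
    have -> : size l + size (a :: rcons u' b) - db = size l + size (a :: u') - (db - 1)
      by rewrite /=; lia.
    exact: H2.
have agX := @agFX S (Ab Phi) l _ _ r sv sv' HP.
have agY := @agFY S (Ab Phi) l _ _ r sv sv' HQ.
have X0 : 0 < size l + 1 by lia.
have XY : size l + 1 < size l + size (a :: rcons u b) by lia.
have YW : size l + size (a :: rcons u b) <= size (l ++ (a :: rcons u b) ++ r)
  by rewrite !size_cat; lia.
have XY' : size l + 1 < size l + size (a :: rcons u' b) by lia.
have YW' : size l + size (a :: rcons u' b) <= size (l ++ (a :: rcons u' b) ++ r)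
  by rewrite !size_cat; lia.
split.
  move=> T da db hda hdb H.
  case: (posnP (da + db)) => hd; last exact: Hsub.
  have e1 : da = 0 by lia.
  have e2 : db = 0 by lia.
  subst da db; rewrite !addn0 !subn0 in H *.
  exact: (FI X0 XY YW XY' YW' agX agY Hsub).
move=> [x [y [h1 [h2 [h3 F]]]]].
case: (boolP ((x == size l + 1) && (y == size l + size (a :: rcons u b)))).
  move/andP => [/eqP ex /eqP ey]; subst x y.
  have := FIbad X0 XY YW XY' YW' agX agY Hsub F.
  move=> F'; exists (size l + 1), (size l + size (a :: rcons u' b)).
  split => //; split; first by lia.
  by split.
move=> hne.
case: (ltnP y (size l + size (a :: rcons u b))) => hy.
  (* inside the prefix part *)
  have B : badIn Phi (l ++ (a :: rcons u b) ++ r) (size l + 1) (size l + size (a :: u)).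
    exists x, y; split => //; split => //; split => //; rewrite /=; lia.
  move: B; rewrite eW => B.
  have B1 := proj1 (@TRR_bad S Phi l (a :: u) (b :: r) (size l + 1) (size l + size (a :: u))
     ltac:(lia) ltac:(lia)) B.
  have B2 := Iau2 B1.
  have B3 := proj2 (@TRR_bad S Phi l (a :: u') (b :: r) (size l + 1) (size l + size (a :: u'))
     ltac:(lia) ltac:(lia)) B2.
  rewrite eW; apply: badW B3 => //; rewrite /=; lia.
(* inside the suffix part *)
have hx : size l + 1 < x by lia.
have B : badIn Phi (l ++ (a :: rcons u b) ++ r) (size l + 2) (size l + size (a :: rcons u b)).
  exists x, y; split; first by lia.
  split => //; split => //.
move: B; rewrite eW2 => B.
have E1 := @TRL_bad S Phi (rcons l a) (rcons u b) r (size l + 2)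
   (size l + size (a :: rcons u b)) ltac:(lia) ltac:(lia) ltac:(lia).
cbv zeta in E1; fold d in E1.
have B1 := proj1 E1 B.
have e3 : size l + 2 - d = size (drop d (rcons l a)) + 1 by lia.
have e4 : size l + size (a :: rcons u b) - d =
   size (drop d (rcons l a)) + size (rcons u b) by lia.
rewrite e3 e4 in B1.
have B2 := Iub2 B1.
have E2 := @TRL_bad S Phi (rcons l a) (rcons u' b) r (size l + 2)
   (size l + size (a :: rcons u' b)) ltac:(lia) ltac:(lia) ltac:(lia).
cbv zeta in E2; fold d in E2.
have B3 : badIn Phi (rcons l a ++ rcons u' b ++ r) (size l + 2) (size l + size (a :: rcons u' b)).
  apply/E2.
  have -> : size l + 2 - d = size (drop d (rcons l a)) + 1 by lia.
  have -> : size l + size (a :: rcons u' b) - d =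
     size (drop d (rcons l a)) + size (rcons u' b) by lia.
  exact: B2.
rewrite eW2; apply: badW B3 => //; lia.
Qed.

Lemma sg_cong (S : finType) (Phi : formula S) a u b a' u' b' :
  sg Phi (a :: u) = sg Phi (a' :: u') -> sg Phi (rcons u b) = sg Phi (rcons u' b') ->
  sg Phi (a :: rcons u b) = sg Phi (a' :: rcons u' b').
Proof.
move=> E1 E2.
have I1 := sg_ieq E1; have I1' := sg_ieq (esym E1).
have I2 := sg_ieq E2; have I2' := sg_ieq (esym E2).
move: E1 E2 => [/ffunP P1 /ffunP Q1 _] [/ffunP P2 /ffunP Q2 _].
have P1' : forall i, i < KK Phi -> onth (a :: u) i = onth (a' :: u') i.
  by move=> i hi; have := P1 (Ordinal hi); rewrite !ffunE.
have Q1' : forall i, i < KK Phi -> onth (rev (a :: u)) i = onth (rev (a' :: u')) i.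
  by move=> i hi; have := Q1 (Ordinal hi); rewrite !ffunE.
have P2' : forall i, i < KK Phi -> onth (rcons u b) i = onth (rcons u' b') i.
  by move=> i hi; have := P2 (Ordinal hi); rewrite !ffunE.
have Q2' : forall i, i < KK Phi -> onth (rev (rcons u b)) i = onth (rev (rcons u' b')) i.
  by move=> i hi; have := Q2 (Ordinal hi); rewrite !ffunE.
have ea : a = a' by have := P1' 0 isT => -[].
have eb : b = b' by have := Q2' 0 isT; rewrite !rev_rcons => -[].
subst a' b'.
have erv : forall u0, rev (a :: rcons u0 b) = b :: rev (a :: u0).
  by move=> u0; rewrite !rev_cons rev_rcons.
have HP : forall i, i < (Ab Phi).+2 -> onth (a :: rcons u b) i = onth (a :: rcons u' b) i.
  case=> [//|j] hj /=; apply: P2'; rewrite /KK; lia.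
have HQ : forall i, i < (Ab Phi).+2 ->
    onth (rev (a :: rcons u b)) i = onth (rev (a :: rcons u' b)) i.
  case=> [|j] hj; rewrite !erv //=; apply: Q1'; rewrite /KK; lia.
case: (ltnP (size (a :: rcons u b)) (Ab Phi).+2) => hs.
  have hs' : size (a :: rcons u' b) <= size (a :: rcons u b).
    rewrite -onthNE -(HP _ hs) onthNE //.
  suff -> : a :: rcons u b = a :: rcons u' b by [].
  apply: eq_from_onth => i.
  case: (ltnP i (Ab Phi).+2) => hi; first exact: HP.
  rewrite !onth_default //; lia.
have hs' : (Ab Phi).+2 <= size (a :: rcons u' b).
  have := HP (Ab Phi).+1 (ltnSn _).
  have : (Ab Phi).+1 < size (a :: rcons u b) by [].
  rewrite -onthTE => h1 h2; move: h1; rewrite h2 onthTE //.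
have HP' : forall i, i < (Ab Phi).+2 -> onth (a :: rcons u' b) i = onth (a :: rcons u b) i.
  by move=> i hi; rewrite HP.
have HQ' : forall i, i < (Ab Phi).+2 ->
    onth (rev (a :: rcons u' b)) i = onth (rev (a :: rcons u b)) i.
  by move=> i hi; rewrite HQ.
rewrite /sg; congr (_, _, _).
- by apply/ffunP => i; rewrite !ffunE; apply: HP; exact: ltn_ord.
- by apply/ffunP => i; rewrite !ffunE; apply: HQ; exact: ltn_ord.
apply/ffunP => -[c1 c2]; rewrite !ffunE /=.
have hl := real_size c1; have hr := real_size c2.
have [C1 C2] := cong_dir I1 I2 HP HQ hs hs' hl hr.
have [C1' C2'] := cong_dir I1' I2' HP' HQ' hs' hs hl hr.
rewrite /info; congr (_, _).
  apply/ffunP => -[[da db] T]; rewrite !ffunE /=; apply: pb_iff.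
  have hda := ltn_ord da; have hdb := ltn_ord db.
  split; [apply: C1 | apply: C1']; lia.
by apply: pb_iff; split; [apply: C2 | apply: C2'].
Qed.

Unset Implicit Arguments.

Theorem lemma10 (S : finType) (L : seq S -> Prop) :
  incl_ESO_HORN L -> Trellis L.
Proof.
move=> [L0 [Phi HPhi]].
pose c0 : Cd Phi * Cd Phi := ([ffun => None], [ffun => None]).
have r0 : real ([ffun => None] : Cd Phi) = [::].
  rewrite /real; elim: (enum _) => //= i s IH; rewrite ffunE /=; exact: IH.
apply: (@ATL S L _ (sg Phi) (fun x => ~~ (x.2 c0).2)) => //.
- move=> s s' [/ffunP E _ _].
  have := E (Ordinal (n := KK Phi) (m := 0) isT); rewrite !ffunE /=; by case.
- move=> a u b a' u' b'; exact: sg_cong.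
move=> w wn; rewrite HPhi // models_iff /sg ffunE /= /info /= r0 /= cats0 add0n.
split => [nb|/negP h hb]; last by apply: h; apply/pbT.
by apply/negP => h; apply: nb; apply/pbT.
Qed.
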